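(* In the setting of the context (QFSR scheme: quadratic flux reconstruction in the solution), let $\mathcal{E}_j=(\Phi_{j+1/2}-\Phi_{j-1/2})/h$ evaluated on exact nodal values. If $\kappa_3=0$, then as $h\to0$ with derivatives at $x_j$, $$\mathcal{E}_j=\frac{\partial f}{\partial x}+\frac14\left[\Big(\kappa-\frac13\Big)\frac{\partial f}{\partial u}\frac{\partial^3u}{\partial x^3}+(\kappa+\theta_2-1)\frac{\partial^2 f}{\partial u^2}\frac{\partial u}{\partial x}\frac{\partial^2u}{\partial x^2}+\frac12\Big(\theta_2-\frac23\Big)\frac{\partial^3 f}{\partial u^3}\Big(\frac{\partial u}{\partial x}\Big)^3\right]h^2-\frac{\kappa-1}{8}\left[\frac{\partial D}{\partial x}\frac{\partial^3 u}{\partial x^3}+D(u(x_j))\frac{\partial^4 u}{\partial x^4}\right]h^3+O(h^4),$$ where $f$ denotes $f(u(x))$, $f$-derivatives in $u$ are evaluated at $u(x_j)$, and $\partial D/\partial x=\frac{d}{dx}D(u(x))$. In particular, $\kappa=1/3$ and $\theta_2=2/3$ give third-order accuracy.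
   Context: Let $h>0$, uniform grid $x_i=ih$, $i\in\mathbb{Z}$. Let $u$ be a smooth real function of $x$, $u_i=u(x_i)$; let $f$ (flux) and $D$ (dissipation coefficient) be smooth real functions of one variable. Define successive central differences $(u_x)_i=(u_{i+1}-u_{i-1})/(2h)$, $(u_{xx})_i=((u_x)_{i+1}-(u_x)_{i-1})/(2h)$. For the face $i+1/2$ with $j=i$, $k=i+1$, let $T_j=\frac h4((u_x)_k-(u_x)_j)-\frac{h^2}{4}(u_{xx})_j$, $T_k=\frac h4((u_x)_k-(u_x)_j)-\frac{h^2}{4}(u_{xx})_k$, and reconstructed states (parameters $\kappa,\kappa_3$) $u_L=\kappa\frac{u_j+u_k}{2}+(1-\kappa)[u_j+\frac h2(u_x)_j]+\kappa_3T_j$, $u_R=\kappa\frac{u_j+u_k}{2}+(1-\kappa)[u_k-\frac h2(u_x)_k]+\kappa_3T_k$. With $\Delta_L=u_L-u_j$, $\Delta_R=u_R-u_k$ and parameter $\theta_2$, the reconstructed fluxes are $f_L=f(u_j)+f'(u_j)\Delta_L+\frac{\theta_2}{2}f''(u_j)\Delta_L^2$ and $f_R=f(u_k)+f'(u_k)\Delta_R+\frac{\theta_2}{2}f''(u_k)\Delta_R^2$. Numerical flux: $\Phi_{i+1/2}=\frac12(f_L+f_R)-\frac12D_{i+1/2}(u_R-u_L)$, with $D_{i+1/2}=\bar D(u_i,u_{i+1})$ for a smooth symmetric $\bar D$ with $\bar D(v,v)=D(v)$. *)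

(* Defs.v *)
From Stdlib Require Import Reals Lra ZArith List.
From Coquelicot Require Import Coquelicot.
Open Scope R_scope.

Definition smooth1 (g : R -> R) : Prop :=
  forall (n : nat) (x : R), ex_derive (Derive_n g n) x.

(** Iterated partial derivatives of a function of two real variables,
    along a word of directions (true = first variable, false = second). *)
Fixpoint dpart (w : list bool) (g : R -> R -> R) : R -> R -> R :=
  match w with
  | nil => g
  | b :: w' =>
      let G := dpart w' g in
      if b then (fun s t => Derive (fun s' => G s' t) s)
      else (fun s t => Derive (fun t' => G s t') t)
  end.

Definition smooth2 (g : R -> R -> R) : Prop :=
  forall (w : list bool) (s t : R),
    ex_derive (fun s' => dpart w g s' t) s /\
    ex_derive (fun t' => dpart w g s t') t /\
    continuous (fun p : R * R => dpart w g (fst p) (snd p)) (s, t).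

Definition ux (U : Z -> R) (h : R) (i : Z) : R :=
  (U (i + 1)%Z - U (i - 1)%Z) / (2 * h).

Definition uxx (U : Z -> R) (h : R) (i : Z) : R :=
  (ux U h (i + 1)%Z - ux U h (i - 1)%Z) / (2 * h).

(** Reconstructed left/right states at face i+1/2 (j = i, k = i+1). *)
Definition T_j (U : Z -> R) (h : R) (i : Z) : R :=
  h / 4 * (ux U h (i + 1)%Z - ux U h i) - h ^ 2 / 4 * uxx U h i.

Definition T_k (U : Z -> R) (h : R) (i : Z) : R :=
  h / 4 * (ux U h (i + 1)%Z - ux U h i) - h ^ 2 / 4 * uxx U h (i + 1)%Z.

Definition uL (kappa kappa3 : R) (U : Z -> R) (h : R) (i : Z) : R :=
  kappa * ((U i + U (i + 1)%Z) / 2)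
  + (1 - kappa) * (U i + h / 2 * ux U h i)
  + kappa3 * T_j U h i.

Definition uR (kappa kappa3 : R) (U : Z -> R) (h : R) (i : Z) : R :=
  kappa * ((U i + U (i + 1)%Z) / 2)
  + (1 - kappa) * (U (i + 1)%Z - h / 2 * ux U h (i + 1)%Z)
  + kappa3 * T_k U h i.

Definition fL (f : R -> R) (kappa kappa3 theta2 : R) (U : Z -> R) (h : R)
  (i : Z) : R :=
  let dL := uL kappa kappa3 U h i - U i in
  f (U i) + Derive f (U i) * dL + theta2 / 2 * Derive_n f 2 (U i) * dL ^ 2.

Definition fR (f : R -> R) (kappa kappa3 theta2 : R) (U : Z -> R) (h : R)
  (i : Z) : R :=
  let dR := uR kappa kappa3 U h i - U (i + 1)%Z in
  f (U (i + 1)%Z) + Derive f (U (i + 1)%Z) * dR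
  + theta2 / 2 * Derive_n f 2 (U (i + 1)%Z) * dR ^ 2.

(** Numerical flux Phi_{i+1/2}. *)
Definition Phi (f : R -> R) (Dbar : R -> R -> R) (kappa kappa3 theta2 : R)
  (U : Z -> R) (h : R) (i : Z) : R :=
  1 / 2 * (fL f kappa kappa3 theta2 U h i + fR f kappa kappa3 theta2 U h i)
  - 1 / 2 * Dbar (U i) (U (i + 1)%Z)
      * (uR kappa kappa3 U h i - uL kappa kappa3 U h i).

Definition Err (f : R -> R) (Dbar : R -> R -> R) (kappa kappa3 theta2 : R)
  (U : Z -> R) (h : R) (j : Z) : R :=
  (Phi f Dbar kappa kappa3 theta2 U h j
   - Phi f Dbar kappa kappa3 theta2 U h (j - 1)%Z) / h.

Definition nodes (u : R -> R) (x0 h : R) : Z -> R :=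
  fun i => u (x0 + IZR i * h).

(* Main.v *)
Require Import Defs.
From Stdlib Require Import Reals ZArith Lra Lia List.
From Coquelicot Require Import Coquelicot.
Open Scope R_scope.

Lemma sum_at0 (c : nat -> R) n :
  sum_f_R0 (fun m => 0 ^ m / INR (fact m) * c m) n = c 0%nat.
Proof. induction n; cbn [sum_f_R0 fact INR pow Nat.add Nat.mul]. field. rewrite IHn. unfold Rdiv. rewrite !Rmult_0_l. apply Rplus_0_r. Qed.

Lemma pm (s r : R) : s + r - s = r.
Proof. ring. Qed.

Lemma cont_bound (F : R -> R) a : ex_derive F a ->
  exists d, 0 < d /\ forall y, Rabs (y - a) < d -> Rabs (F y) <= Rabs (F a) + 1.
Proof.
  intros H. apply ex_derive_continuous in H. apply continuity_pt_filterlim in H.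
  unfold continuity_pt, continue_in, limit1_in, limit_in in H.
  destruct (H 1 Rlt_0_1) as [d [Hd Hb]]. exists d. split; [lra|].
  intros y Hy. destruct (Req_dec y a) as [->|Hne]; [lra|].
  assert (Hl : R_dist (F y) (F a) < 1).
  { apply (Hb y). split. split. exact I. auto. exact Hy. }
  unfold R_dist in Hl. pose proof (Rabs_triang_inv (F y) (F a)). lra.
Qed.

Lemma rem_bound e m Fa Dz K : 1 <= Fa -> Rabs Dz <= K ->
  Rabs (e ^ m / Fa * Dz) <= K * Rabs e ^ m.
Proof.
  intros H1 H2. unfold Rdiv. rewrite !Rabs_mult, <- RPow_abs.
  rewrite Rabs_inv, (Rabs_right Fa) by lra.
  assert (0 < / Fa <= 1).
  { split. apply Rinv_0_lt_compat; lra. rewrite <- Rinv_1. apply Rinv_le_contravar; lra. }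
  assert (0 <= Rabs e ^ m) by (apply pow_le; apply Rabs_pos).
  assert (0 <= Rabs Dz) by apply Rabs_pos.
  apply Rle_trans with (Rabs e ^ m * 1 * K).
  apply Rmult_le_compat; try lra.
  - apply Rmult_le_pos; lra.
  - apply Rmult_le_compat_l; lra.
  - lra.
Qed.

Lemma fact_ge1 n : 1 <= INR (fact n).
Proof. apply (le_INR 1). apply lt_O_fact. Qed.

Lemma taylor_gen (g : R -> R) (n : nat) (a : R)
  (Hd : forall k x, (k <= S n)%nat -> ex_derive (Derive_n g k) x) :
  exists M d, 0 < d /\ forall e, Rabs e < d ->
    Rabs (g (a + e) - sum_f_R0 (fun m => e ^ m / INR (fact m) * Derive_n g m a) n)
      <= M * Rabs e ^ S n.
Proof.
  destruct (cont_bound (Derive_n g (S n)) a (Hd _ _ (le_n _))) as [d [Hd0 Hb]].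
  exists (Rabs (Derive_n g (S n) a) + 1), d. split; [exact Hd0|].
  intros e He.
  destruct (Rtotal_order e 0) as [Hn|[H0|Hp]].
  - set (g' := fun t => g (- t)).
    assert (Hloc : forall t, locally (- t) (fun y : R_UniformSpace =>
        forall k : nat, (k <= S n)%nat -> ex_derive_n g k y)).
    { intros t. exists (mkposreal _ Rlt_0_1). intros y _ k Hk.
      destruct k; simpl; [exact I|]. apply Hd. lia. }
    destruct (Taylor_Lagrange g' n (- a) (- a - e)) as [z [Hz Heq]]; [lra|..].
    { intros t _ k Hk. apply ex_derive_n_comp_opp.
      destruct (Hloc t) as [eps Heps]. exists eps. intros y Hy k0 Hk0.
      apply Heps; auto. lia. }
    unfold g' at 1 in Heq. replace (- (- a - e)) with (a + e) in Heq by ring.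
    rewrite Heq.
    assert (Hs : sum_f_R0 (fun m => (- a - e - - a) ^ m / INR (fact m) * Derive_n g' m (- a)) n
              = sum_f_R0 (fun m => e ^ m / INR (fact m) * Derive_n g m a) n).
    { apply sum_eq. intros i Hi. unfold g'. rewrite Derive_n_comp_opp.
      rewrite Ropp_involutive.
      replace (- a - e - - a) with (-1 * e) by ring. rewrite Rpow_mult_distr.
      assert (Hp : (-1) ^ i * (-1) ^ i = 1).
      { rewrite <- Rpow_mult_distr. replace (-1 * -1) with 1 by ring. apply pow1. }
      set (p := (-1) ^ i) in *. set (q := e ^ i). set (F := INR (fact i)).
      set (D0 := Derive_n g i a).
      unfold Rdiv. transitivity ((p * p) * (q * / F * D0)). ring. rewrite Hp. ring.
      destruct (Hloc (- a)) as [eps Heps]. exists eps. intros y Hy k0 Hk0.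
      apply Heps; auto. lia. }
    rewrite Hs.
    rewrite pm.
    replace (Rabs e) with (Rabs (- a - e - - a)) by (rewrite <- (Rabs_Ropp e); f_equal; ring).
    apply rem_bound. apply fact_ge1.
    unfold g'. rewrite Derive_n_comp_opp.
    rewrite Rabs_mult, pow_1_abs, Rmult_1_l. apply Hb.
    rewrite Rabs_left in He by lra. rewrite Rabs_left by lra. lra.
    destruct (Hloc z) as [eps Heps]. exists eps. intros y Hy k0 Hk0.
    apply Heps; auto.
  - subst e. rewrite sum_at0, Rplus_0_r, Rabs_R0, pow_i by lia. simpl.
    rewrite Rminus_diag, Rabs_R0. lra.
  - destruct (Taylor_Lagrange g n a (a + e)) as [z [Hz Heq]]; [lra|..].
    { intros t _ k Hk. destruct k; simpl; [exact I|]. apply Hd. lia. }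
    rewrite Heq. replace (a + e - a) with e by ring.
    rewrite pm.
    apply rem_bound. apply fact_ge1. apply Hb.
    rewrite Rabs_right in He by lra. rewrite Rabs_right by lra. lra.
Qed.

Definition O5 (g : R -> R) : Prop :=
  exists C d, 0 < d /\ forall h, 0 < h < d -> Rabs (g h) <= C * h ^ 5.
Definition Bd (g : R -> R) : Prop :=
  exists C d, 0 < d /\ forall h, 0 < h < d -> Rabs (g h) <= C.

Lemma mins d1 d2 h : h < Rmin d1 d2 -> h < d1 /\ h < d2.
Proof. unfold Rmin; destruct (Rle_dec d1 d2); lra. Qed.
Lemma minpos d1 d2 : 0 < d1 -> 0 < d2 -> 0 < Rmin d1 d2.
Proof. unfold Rmin; destruct (Rle_dec d1 d2); lra. Qed.

Lemma O5_ext g k : (forall h, 0 < h -> g h = k h) -> O5 k -> O5 g.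
Proof. intros E [C [d [Hd H]]]. exists C, d. split; auto. intros h Hh. rewrite E by lra. auto. Qed.
Lemma Bd_ext g k : (forall h, 0 < h -> g h = k h) -> Bd k -> Bd g.
Proof. intros E [C [d [Hd H]]]. exists C, d. split; auto. intros h Hh. rewrite E by lra. auto. Qed.

Lemma O5_plus g k : O5 g -> O5 k -> O5 (fun h => g h + k h).
Proof.
  intros [C1 [d1 [Hd1 H1]]] [C2 [d2 [Hd2 H2]]]. exists (C1 + C2), (Rmin d1 d2).
  split. apply minpos; auto. intros h [Hh Hh']. apply mins in Hh'. destruct Hh'.
  eapply Rle_trans. apply Rabs_triang. rewrite Rmult_plus_distr_r.
  apply Rplus_le_compat; [apply H1|apply H2]; lra.
Qed.
Lemma O5_opp g : O5 g -> O5 (fun h => - g h).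
Proof. intros [C [d [Hd H]]]. exists C, d. split; auto. intros h Hh. rewrite Rabs_Ropp. auto. Qed.
Lemma O5_minus g k : O5 g -> O5 k -> O5 (fun h => g h - k h).
Proof. intros. apply (O5_plus g (fun h => - k h)); auto. apply O5_opp; auto. Qed.

Lemma Bd_plus g k : Bd g -> Bd k -> Bd (fun h => g h + k h).
Proof.
  intros [C1 [d1 [Hd1 H1]]] [C2 [d2 [Hd2 H2]]]. exists (C1 + C2), (Rmin d1 d2).
  split. apply minpos; auto. intros h [Hh Hh']. apply mins in Hh'. destruct Hh'.
  eapply Rle_trans. apply Rabs_triang.
  apply Rplus_le_compat; [apply H1|apply H2]; lra.
Qed.
Lemma Bd_opp g : Bd g -> Bd (fun h => - g h).
Proof. intros [C [d [Hd H]]]. exists C, d. split; auto. intros h Hh. rewrite Rabs_Ropp. auto. Qed.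
Lemma Bd_minus g k : Bd g -> Bd k -> Bd (fun h => g h - k h).
Proof. intros. apply (Bd_plus g (fun h => - k h)); auto. apply Bd_opp; auto. Qed.
Lemma Bd_mult g k : Bd g -> Bd k -> Bd (fun h => g h * k h).
Proof.
  intros [C1 [d1 [Hd1 H1]]] [C2 [d2 [Hd2 H2]]]. exists (C1 * C2), (Rmin d1 d2).
  split. apply minpos; auto. intros h [Hh Hh']. apply mins in Hh'. destruct Hh'.
  rewrite Rabs_mult. apply Rmult_le_compat; try apply Rabs_pos; [apply H1|apply H2]; lra.
Qed.
Lemma Bd_const c : Bd (fun _ => c).
Proof. exists (Rabs c), 1. split; [lra|]. intros; lra. Qed.
Lemma Bd_id : Bd (fun h => h).
Proof. exists 1, 1. split; [lra|]. intros h Hh. rewrite Rabs_right; lra. Qed.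
Lemma Bd_pow g n : Bd g -> Bd (fun h => g h ^ n).
Proof.
  intros Hg. induction n.
  - apply (Bd_ext _ (fun _ => 1)). intros; reflexivity. apply Bd_const.
  - apply (Bd_ext _ (fun h => g h * g h ^ n)). intros; reflexivity. apply Bd_mult; auto.
Qed.
Lemma Bd_inv c : Bd (fun _ => / c).
Proof. apply Bd_const. Qed.

Lemma O5_Bd_mult g k : O5 g -> Bd k -> O5 (fun h => g h * k h).
Proof.
  intros [C1 [d1 [Hd1 H1]]] [C2 [d2 [Hd2 H2]]]. exists (C1 * C2), (Rmin d1 d2).
  split. apply minpos; auto. intros h [Hh Hh']. apply mins in Hh'. destruct Hh'.
  rewrite Rabs_mult.
  replace (C1 * C2 * h ^ 5) with (C1 * h ^ 5 * C2) by ring.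
  apply Rmult_le_compat; try apply Rabs_pos; [apply H1|apply H2]; lra.
Qed.
Lemma Bd_O5_mult g k : Bd k -> O5 g -> O5 (fun h => k h * g h).
Proof. intros. apply (O5_ext _ (fun h => g h * k h)). intros; ring. apply O5_Bd_mult; auto. Qed.
Lemma O5_h5 k : Bd k -> O5 (fun h => h ^ 5 * k h).
Proof.
  intros [C [d [Hd H]]]. exists C, d. split; auto. intros h Hh.
  rewrite Rabs_mult, Rmult_comm, (Rabs_right (h ^ 5)).
  apply Rmult_le_compat_r. apply pow_le; lra. auto.
  apply Rle_ge, pow_le; lra.
Qed.
Lemma O5_Bd g : O5 g -> Bd g.
Proof.
  intros [C [d [Hd H]]]. exists (Rabs C), (Rmin d 1). split. apply minpos; lra.
  intros h [Hh Hh']. apply mins in Hh'. destruct Hh'.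
  eapply Rle_trans. apply H; lra.
  assert (0 <= h ^ 5 <= 1). { split. apply pow_le; lra. rewrite <- (pow1 5). apply pow_incr; lra. }
  apply Rle_trans with (Rabs C * h ^ 5). apply Rmult_le_compat_r. lra. apply Rle_abs.
  pose proof (Rabs_pos C). nra.
Qed.

Ltac bd := match goal with
  | |- Bd (fun _ => ?c) => apply Bd_const
  | |- Bd (fun h => h) => apply Bd_id
  | |- Bd (fun h => @?a h + @?b h) => apply (Bd_plus a b); bd
  | |- Bd (fun h => @?a h - @?b h) => apply (Bd_minus a b); bd
  | |- Bd (fun h => @?a h * @?b h) => apply (Bd_mult a b); bd
  | |- Bd (fun h => - @?a h) => apply (Bd_opp a); bd
  | |- Bd (fun h => @?a h / ?c) => apply (Bd_mult a (fun _ => / c)); [bd | apply Bd_const]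
  | |- Bd (fun h => @?a h ^ ?n) => apply (Bd_pow a n); bd
  | _ => assumption
  end.

Definition J5 (a0 a1 a2 a3 a4 : R) (g : R -> R) : Prop :=
  O5 (fun h => g h - (a0 + a1 * h + a2 * h ^ 2 + a3 * h ^ 3 + a4 * h ^ 4)).

Lemma J5_Bd a0 a1 a2 a3 a4 g : J5 a0 a1 a2 a3 a4 g -> Bd g.
Proof.
  intros H. apply O5_Bd in H.
  apply (Bd_ext _ (fun h => (g h - (a0 + a1 * h + a2 * h ^ 2 + a3 * h ^ 3 + a4 * h ^ 4))
     + (a0 + a1 * h + a2 * h ^ 2 + a3 * h ^ 3 + a4 * h ^ 4))).
  intros; ring. bd.
Qed.

Lemma J5_plus a0 a1 a2 a3 a4 b0 b1 b2 b3 b4 g k :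
  J5 a0 a1 a2 a3 a4 g -> J5 b0 b1 b2 b3 b4 k ->
  J5 (a0 + b0) (a1 + b1) (a2 + b2) (a3 + b3) (a4 + b4) (fun h => g h + k h).
Proof.
  intros H1 H2. unfold J5. eapply O5_ext; [|apply (O5_plus _ _ H1 H2)].
  intros; simpl; ring.
Qed.
Lemma J5_minus a0 a1 a2 a3 a4 b0 b1 b2 b3 b4 g k :
  J5 a0 a1 a2 a3 a4 g -> J5 b0 b1 b2 b3 b4 k ->
  J5 (a0 - b0) (a1 - b1) (a2 - b2) (a3 - b3) (a4 - b4) (fun h => g h - k h).
Proof.
  intros H1 H2. unfold J5. eapply O5_ext; [|apply (O5_minus _ _ H1 H2)].
  intros; simpl; ring.
Qed.
Lemma J5_opp a0 a1 a2 a3 a4 g :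
  J5 a0 a1 a2 a3 a4 g -> J5 (- a0) (- a1) (- a2) (- a3) (- a4) (fun h => - g h).
Proof.
  intros H1. unfold J5. eapply O5_ext; [|apply (O5_opp _ H1)].
  intros; simpl; ring.
Qed.
Lemma J5_const c : J5 c 0 0 0 0 (fun _ => c).
Proof.
  unfold J5. apply (O5_ext _ (fun h => h ^ 5 * 0)). intros; ring.
  apply O5_h5. bd.
Qed.
Lemma J5_divc a0 a1 a2 a3 a4 g c :
  J5 a0 a1 a2 a3 a4 g -> J5 (a0 / c) (a1 / c) (a2 / c) (a3 / c) (a4 / c) (fun h => g h / c).
Proof.
  intros H1. unfold J5.
  apply (O5_ext _ (fun h => (g h - (a0 + a1 * h + a2 * h ^ 2 + a3 * h ^ 3 + a4 * h ^ 4)) * / c)).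
  intros; unfold Rdiv; ring.
  apply O5_Bd_mult; auto. apply Bd_const.
Qed.
Lemma J5_mult a0 a1 a2 a3 a4 b0 b1 b2 b3 b4 g k :
  J5 a0 a1 a2 a3 a4 g -> J5 b0 b1 b2 b3 b4 k ->
  J5 (a0 * b0) (a0 * b1 + a1 * b0) (a0 * b2 + a1 * b1 + a2 * b0)
     (a0 * b3 + a1 * b2 + a2 * b1 + a3 * b0)
     (a0 * b4 + a1 * b3 + a2 * b2 + a3 * b1 + a4 * b0) (fun h => g h * k h).
Proof.
  intros H1 H2. pose proof (J5_Bd _ _ _ _ _ _ H2) as Bk. unfold J5.
  apply (O5_ext _ (fun h =>
     (g h - (a0 + a1 * h + a2 * h ^ 2 + a3 * h ^ 3 + a4 * h ^ 4)) * k h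
   + (a0 + a1 * h + a2 * h ^ 2 + a3 * h ^ 3 + a4 * h ^ 4) *
       (k h - (b0 + b1 * h + b2 * h ^ 2 + b3 * h ^ 3 + b4 * h ^ 4))
   + h ^ 5 * ((a1 * b4 + a2 * b3 + a3 * b2 + a4 * b1)
              + (a2 * b4 + a3 * b3 + a4 * b2) * h + (a3 * b4 + a4 * b3) * h ^ 2
              + a4 * b4 * h ^ 3))).
  intros; ring.
  apply O5_plus. apply O5_plus.
  apply O5_Bd_mult; auto.
  apply (Bd_O5_mult (fun h => k h - (b0 + b1 * h + b2 * h ^ 2 + b3 * h ^ 3 + b4 * h ^ 4))
                    (fun h => a0 + a1 * h + a2 * h ^ 2 + a3 * h ^ 3 + a4 * h ^ 4)); auto. bd.
  apply O5_h5. bd.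
Qed.
Lemma J5_eq a0 a1 a2 a3 a4 b0 b1 b2 b3 b4 g :
  J5 b0 b1 b2 b3 b4 g -> b0 = a0 -> b1 = a1 -> b2 = a2 -> b3 = a3 -> b4 = a4 ->
  J5 a0 a1 a2 a3 a4 g.
Proof. intros H; intros; subst; auto. Qed.
Lemma J5_ext a0 a1 a2 a3 a4 g k :
  (forall h, 0 < h -> g h = k h) -> J5 a0 a1 a2 a3 a4 k -> J5 a0 a1 a2 a3 a4 g.
Proof. intros E H. unfold J5. eapply O5_ext; [|exact H]. intros h Hh. simpl. rewrite E; auto. Qed.

Definition TaylorAt (F : R -> R) (a F0 F1 F2 F3 F4 : R) : Prop :=
  exists M d, 0 < d /\ forall e, Rabs e < d ->
   Rabs (F (a + e) - (F0 + F1 * e + F2 / 2 * e ^ 2 + F3 / 6 * e ^ 3 + F4 / 24 * e ^ 4))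
     <= M * Rabs e ^ 5.

Lemma taylor4 g a (Hd : forall k x, ex_derive (Derive_n g k) x) :
  TaylorAt g a (g a) (Derive g a) (Derive_n g 2 a) (Derive_n g 3 a) (Derive_n g 4 a).
Proof.
  destruct (taylor_gen g 4 a (fun k x _ => Hd k x)) as [M [d [Hd0 H]]].
  exists M, d. split; auto. intros e He. specialize (H e He).
  match goal with |- Rabs (_ - ?T) <= _ => replace T with
    (sum_f_R0 (fun m => e ^ m / INR (fact m) * Derive_n g m a) 4); auto end.
  cbn [sum_f_R0 fact INR Nat.add Nat.mul].
  change (Derive_n g 0 a) with (g a).
  change (Derive_n g 1 a) with (Derive g a). field.
Qed.

Lemma O5_div_h g : O5 g -> Bd (fun h => g h / h).
Proof.
  intros [C [d [Hd H]]]. exists (Rabs C), (Rmin d 1). split. apply minpos; lra.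
  intros h [Hh Hh']. apply mins in Hh'. destruct Hh'.
  unfold Rdiv. rewrite Rabs_mult, Rabs_inv, (Rabs_right h) by lra.
  apply Rle_trans with (C * h ^ 5 * / h). apply Rmult_le_compat_r.
  left; apply Rinv_0_lt_compat; lra. apply H; lra.
  replace (C * h ^ 5 * / h) with (C * h ^ 4) by (field; lra).
  assert (0 <= h ^ 4 <= 1). { split. apply pow_le; lra. rewrite <- (pow1 4). apply pow_incr; lra. }
  apply Rle_trans with (Rabs C * h ^ 4). apply Rmult_le_compat_r. lra. apply Rle_abs.
  pose proof (Rabs_pos C). nra.
Qed.

Lemma J5_O1 a1 a2 a3 a4 d : J5 0 a1 a2 a3 a4 d ->
  exists K δ, 0 < δ /\ forall h, 0 < h < δ -> Rabs (d h) <= K * h.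
Proof.
  intros H. apply O5_div_h in H.
  assert (Hb : Bd (fun h => d h / h)).
  { apply (Bd_ext _ (fun h => (d h - (0 + a1 * h + a2 * h ^ 2 + a3 * h ^ 3 + a4 * h ^ 4)) / h
        + (a1 + a2 * h + a3 * h ^ 2 + a4 * h ^ 3))).
    intros h Hh. field. lra. bd. }
  destruct Hb as [C [δ [Hδ Hb]]]. exists C, δ. split; auto. intros h Hh.
  specialize (Hb h Hh). unfold Rdiv in Hb. rewrite Rabs_mult, Rabs_inv, (Rabs_right h) in Hb by lra.
  replace (Rabs (d h)) with (Rabs (d h) * / h * h) by (field; lra).
  apply Rmult_le_compat_r; lra.
Qed.

Ltac jet := match goal with
  | |- J5 _ _ _ _ _ (fun _ => ?c) => apply J5_const
  | |- J5 _ _ _ _ _ (fun h => @?a h + @?b h) => eapply (J5_plus _ _ _ _ _ _ _ _ _ _ a b); [jet|jet]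
  | |- J5 _ _ _ _ _ (fun h => @?a h - @?b h) => eapply (J5_minus _ _ _ _ _ _ _ _ _ _ a b); [jet|jet]
  | |- J5 _ _ _ _ _ (fun h => @?a h * @?b h) => eapply (J5_mult _ _ _ _ _ _ _ _ _ _ a b); [jet|jet]
  | |- J5 _ _ _ _ _ (fun h => - @?a h) => eapply (J5_opp _ _ _ _ _ a); jet
  | |- J5 _ _ _ _ _ (fun h => @?a h / ?c) => eapply (J5_divc _ _ _ _ _ a c); jet
  | |- J5 _ _ _ _ _ (fun h => @?a h ^ 2) =>
      eapply (J5_ext _ _ _ _ _ _ (fun h => a h * a h)); [intros; cbv beta; ring | jet]
  | |- J5 _ _ _ _ _ (fun h => @?a h ^ 3) =>
      eapply (J5_ext _ _ _ _ _ _ (fun h => a h * (a h * a h))); [intros; cbv beta; ring | jet]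
  | |- J5 _ _ _ _ _ (fun h => @?a h ^ 4) =>
      eapply (J5_ext _ _ _ _ _ _ (fun h => (a h * a h) * (a h * a h))); [intros; cbv beta; ring | jet]
  | _ => solve [eauto]
  end.

Lemma J5_comp F a F0 F1 F2 F3 F4 a1 a2 a3 a4 g :
  TaylorAt F a F0 F1 F2 F3 F4 -> J5 a a1 a2 a3 a4 g ->
  J5 F0 (F1 * a1) (F1 * a2 + F2 / 2 * a1 ^ 2) (F1 * a3 + F2 * a1 * a2 + F3 / 6 * a1 ^ 3)
     (F1 * a4 + F2 * (a1 * a3 + a2 ^ 2 / 2) + F3 / 2 * a1 ^ 2 * a2 + F4 / 24 * a1 ^ 4)
     (fun h => F (g h)).
Proof.
  intros [M [δ [Hδ HT]]] Hg.
  assert (Hd : J5 0 a1 a2 a3 a4 (fun h => g h - a)).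
  { unfold J5 in *. eapply O5_ext; [|exact Hg]. intros; cbv beta; ring. }
  destruct (J5_O1 _ _ _ _ _ Hd) as [K [δ1 [Hδ1 HK]]].
  assert (HA : O5 (fun h => F (g h) - (F0 + F1 * (g h - a) + F2 / 2 * (g h - a) ^ 2
                 + F3 / 6 * (g h - a) ^ 3 + F4 / 24 * (g h - a) ^ 4))).
  { exists (Rabs M * Rabs K ^ 5), (Rmin δ1 (δ / (Rabs K + 1))). split.
    apply minpos; auto. apply Rdiv_lt_0_compat; auto. pose proof (Rabs_pos K); lra.
    intros h [Hh Hh']. apply mins in Hh'. destruct Hh' as [H1 H2].
    apply Rlt_div_r in H2; [|pose proof (Rabs_pos K); lra].
    specialize (HK h (conj Hh H1)).
    assert (HK' : Rabs (g h - a) <= Rabs K * h).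
    { eapply Rle_trans; [exact HK|]. apply Rmult_le_compat_r; [lra|apply Rle_abs]. }
    assert (He : Rabs (g h - a) < δ).
    { pose proof (Rabs_pos K). nra. }
    specialize (HT _ He). replace (a + (g h - a)) with (g h) in HT by ring.
    eapply Rle_trans; [exact HT|].
    apply Rle_trans with (Rabs M * Rabs (g h - a) ^ 5).
    apply Rmult_le_compat_r. apply pow_le, Rabs_pos. apply Rle_abs.
    rewrite Rmult_assoc. apply Rmult_le_compat_l. apply Rabs_pos.
    rewrite <- Rpow_mult_distr. apply pow_incr. split. apply Rabs_pos. auto. }
  assert (HB : J5 F0 (F1 * a1) (F1 * a2 + F2 / 2 * a1 ^ 2) (F1 * a3 + F2 * a1 * a2 + F3 / 6 * a1 ^ 3)
     (F1 * a4 + F2 * (a1 * a3 + a2 ^ 2 / 2) + F3 / 2 * a1 ^ 2 * a2 + F4 / 24 * a1 ^ 4)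
     (fun h => F0 + F1 * (g h - a) + F2 / 2 * (g h - a) ^ 2
                 + F3 / 6 * (g h - a) ^ 3 + F4 / 24 * (g h - a) ^ 4)).
  { eapply J5_eq. jet. all: field. }
  unfold J5 in *. eapply O5_ext; [|exact (O5_plus _ _ HA HB)]. intros; cbv beta; ring.
Qed.

Lemma J5_lin u x0 u0 u1 u2 u3 u4 c :
  TaylorAt u x0 u0 u1 u2 u3 u4 ->
  J5 u0 (u1 * c) (u2 / 2 * c ^ 2) (u3 / 6 * c ^ 3) (u4 / 24 * c ^ 4) (fun h => u (x0 + c * h)).
Proof.
  intros [M [δ [Hδ HT]]]. exists (M * Rabs c ^ 5), (δ / (Rabs c + 1)). split.
  apply Rdiv_lt_0_compat; auto. pose proof (Rabs_pos c); lra.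
  intros h [Hh H2]. apply Rlt_div_r in H2; [|pose proof (Rabs_pos c); lra].
  assert (He : Rabs (c * h) < δ).
  { rewrite Rabs_mult, (Rabs_right h) by lra. pose proof (Rabs_pos c). nra. }
  specialize (HT _ He).
  match goal with |- Rabs (_ - ?P) <= _ => replace P with
    (u0 + u1 * (c * h) + u2 / 2 * (c * h) ^ 2 + u3 / 6 * (c * h) ^ 3 + u4 / 24 * (c * h) ^ 4) by ring end.
  eapply Rle_trans; [exact HT|].
  rewrite Rabs_mult, (Rabs_right h) by lra. rewrite Rpow_mult_distr. right; ring.
Qed.

Lemma taylor4n g a (Hd : forall k x, ex_derive (Derive_n g k) x) m :
  TaylorAt (Derive_n g m) a (Derive_n g m a) (Derive_n g (S m) a) (Derive_n g (2 + m) a)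
    (Derive_n g (3 + m) a) (Derive_n g (4 + m) a).
Proof.
  assert (H : forall k x, ex_derive (Derive_n (Derive_n g m) k) x).
  { intros k x. eapply ex_derive_ext. intros t. symmetry. apply Derive_n_comp. apply Hd. }
  pose proof (taylor4 _ a H) as T. rewrite !Derive_n_comp in T. exact T.
Qed.

Lemma phi_dpart (Dbar : R -> R -> R) v k x :
  Derive_n (fun t => Dbar v t) k x = dpart (repeat false k) Dbar v x.
Proof.
  revert x. induction k; intros x. reflexivity.
  simpl. apply Derive_ext. intros t. apply IHk.
Qed.

Lemma phi_smooth (Dbar : R -> R -> R) (HDbar : smooth2 Dbar) v k x :
  ex_derive (Derive_n (fun t => Dbar v t) k) x.
Proof.
  eapply ex_derive_ext. intros t. symmetry. apply phi_dpart.
  apply (HDbar (repeat false k) v x).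
Qed.

Lemma D_deriv (Dbar : R -> R -> R) (D : R -> R) (HDbar : smooth2 Dbar)
  (Hsym : forall v w, Dbar v w = Dbar w v) (Hdiag : forall v, Dbar v v = D v) v :
  Derive D v = 2 * Derive (fun t => Dbar v t) v.
Proof.
  apply is_derive_unique. apply is_derive_Reals.
  set (c := Derive (fun t => Dbar v t) v).
  intros eps Heps.
  destruct (HDbar (false :: nil) v v) as [_ [_ Hc]].
  unfold continuous in Hc.
  pose proof (proj1 (@filterlim_locally (R * R) R_UniformSpace (locally (v, v)) _ _ _) Hc) as Hc2. clear Hc. rename Hc2 into Hc.
  destruct (Hc (mkposreal (eps / 2) ltac:(lra))) as [d1 Hd1].
  assert (Hphi : derivable_pt_lim (fun t => Dbar v t) v c).
  { apply is_derive_Reals. apply Derive_correct. apply (HDbar nil v v). }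
  destruct (Hphi (eps / 2) ltac:(lra)) as [d2 Hd2].
  assert (Hd : 0 < Rmin d1 d2) by (apply minpos; apply cond_pos).
  exists (mkposreal _ Hd). intros e He0 He. simpl in He.
  destruct (mins _ _ _ (Rle_lt_trans _ _ _ (Rle_abs e) He)) as [He1 He2].
  assert (He' : Rabs e < d1 /\ Rabs e < d2).
  { unfold Rmin in He; destruct (Rle_dec d1 d2); lra. }
  destruct He' as [Ha Hb].
  rewrite <- !Hdiag.
  destruct (MVT_gen (fun t => Dbar (v + e) t) v (v + e)
              (fun t => dpart (false :: nil) Dbar (v + e) t)) as [eta [Heta Hmvt]].
  { intros t _. apply Derive_correct. apply (HDbar nil (v + e) t). }
  { intros t _. apply continuity_pt_filterlim. apply (@ex_derive_continuous R_AbsRing R_NormedModule).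
    apply (HDbar nil (v + e) t). }
  assert (Hsplit : Dbar (v + e) (v + e) - Dbar v v =
          dpart (false :: nil) Dbar (v + e) eta * e + (Dbar v (v + e) - Dbar v v)).
  { cbv beta in Hmvt. replace (v + e - v) with e in Hmvt by ring.
    rewrite <- Hmvt. rewrite (Hsym (v + e) v). ring. }
  rewrite Hsplit.
  replace ((dpart (false :: nil) Dbar (v + e) eta * e + (Dbar v (v + e) - Dbar v v)) / e - 2 * c)
    with ((dpart (false :: nil) Dbar (v + e) eta - c) + ((Dbar v (v + e) - Dbar v v) / e - c))
    by (field; auto).
  eapply Rle_lt_trans. apply Rabs_triang.
  assert (H1 : Rabs (dpart (false :: nil) Dbar (v + e) eta - c) < eps / 2).
  { assert (Hb1 : ball (v, v) d1 (v + e, eta)).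
    { split; simpl; unfold ball; simpl; unfold AbsRing_ball, abs, minus, plus, opp; simpl.
      replace (v + e + - v) with e by ring. auto.
      pose proof (Rabs_def2 _ _ Ha). unfold Rmin, Rmax in Heta. destruct (Rle_dec v (v + e)); apply Rabs_def1; lra. }
    specialize (Hd1 _ Hb1). exact Hd1. }
  specialize (Hd2 e He0 Hb). simpl in Hd2. lra.
Qed.
Definition Gcl (f : R -> R) (Dbar : R -> R -> R) (kappa theta2 : R) (u : R -> R) (x0 h : R) : R :=
  (1 / 2 * ((f (u (x0 + 0 * h)) + Derive f (u (x0 + 0 * h)) * ((kappa * ((u (x0 + 0 * h) + u (x0 + 1 * h)) / 2) + (1 - kappa) * (u (x0 + 0 * h) + (u (x0 + 1 * h) - u (x0 + (-1) * h)) / 4)) - u (x0 + 0 * h)) + theta2 / 2 * Derive_n f 2 (u (x0 + 0 * h)) * (((kappa * ((u (x0 + 0 * h) + u (x0 + 1 * h)) / 2) + (1 - kappa) * (u (x0 + 0 * h) + (u (x0 + 1 * h) - u (x0 + (-1) * h)) / 4)) - u (x0 + 0 * h)) * ((kappa * ((u (x0 + 0 * h) + u (x0 + 1 * h)) / 2) + (1 - kappa) * (u (x0 + 0 * h) + (u (x0 + 1 * h) - u (x0 + (-1) * h)) / 4)) - u (x0 + 0 * h)))) + (f (u (x0 + 1 * h)) + Derive f (u (x0 + 1 * h)) * ((kappa * ((u (x0 + 0 * h) + u (x0 + 1 * h)) / 2) + (1 - kappa) * (u (x0 + 1 * h) - (u (x0 + 2 * h) - u (x0 + 0 * h)) / 4))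 - u (x0 + 1 * h)) + theta2 / 2 * Derive_n f 2 (u (x0 + 1 * h)) * (((kappa * ((u (x0 + 0 * h) + u (x0 + 1 * h)) / 2) + (1 - kappa) * (u (x0 + 1 * h) - (u (x0 + 2 * h) - u (x0 + 0 * h)) / 4)) - u (x0 + 1 * h)) * ((kappa * ((u (x0 + 0 * h) + u (x0 + 1 * h)) / 2) + (1 - kappa) * (u (x0 + 1 * h) - (u (x0 + 2 * h) - u (x0 + 0 * h)) / 4)) - u (x0 + 1 * h))))) - 1 / 2 * Dbar (u x0) (u (x0 + 1 * h)) * ((kappa * ((u (x0 + 0 * h) + u (x0 + 1 * h)) / 2) + (1 - kappa) * (u (x0 + 1 * h) - (u (x0 + 2 * h) - u (x0 + 0 * h)) / 4)) - (kappa * ((u (x0 + 0 * h) + u (x0 + 1 * h)) / 2) + (1 - kappa) * (u (x0 + 0 * h) + (u (x0 + 1 * h) - u (x0 + (-1) * h)) / 4)))) - (1 / 2 * ((f (u (x0 + (-1) * h)) + Derive f (u (x0 + (-1) * h)) * ((kappa * ((u (x0 + (-1) * h) + u (x0 + 0 * h)) / 2) + (1 - kappa) * (u (x0 + (-1) * h) + (u (x0 + 0 * h) - u (x0 + (-2) * h)) / 4)) - u (x0 + (-1) * h)) + theta2 / 2 * Derive_n f 2 (u (x0 + (-1) * h)) * (((kappa * ((u (x0 + (-1) * h) + u (x0 + 0 * h)) / 2) + (1 - kappa) * (u (x0 + (-1) * h) + (u (x0 + 0 * h) - u (x0 + (-2) * h)) / 4)) - u (x0 + (-1) * h)) * ((kappa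 * ((u (x0 + (-1) * h) + u (x0 + 0 * h)) / 2) + (1 - kappa) * (u (x0 + (-1) * h) + (u (x0 + 0 * h) - u (x0 + (-2) * h)) / 4)) - u (x0 + (-1) * h)))) + (f (u (x0 + 0 * h)) + Derive f (u (x0 + 0 * h)) * ((kappa * ((u (x0 + (-1) * h) + u (x0 + 0 * h)) / 2) + (1 - kappa) * (u (x0 + 0 * h) - (u (x0 + 1 * h) - u (x0 + (-1) * h)) / 4)) - u (x0 + 0 * h)) + theta2 / 2 * Derive_n f 2 (u (x0 + 0 * h)) * (((kappa * ((u (x0 + (-1) * h) + u (x0 + 0 * h)) / 2) + (1 - kappa) * (u (x0 + 0 * h) - (u (x0 + 1 * h) - u (x0 + (-1) * h)) / 4)) - u (x0 + 0 * h)) * ((kappa * ((u (x0 + (-1) * h) + u (x0 + 0 * h)) / 2) + (1 - kappa) * (u (x0 + 0 * h) - (u (x0 + 1 * h) - u (x0 + (-1) * h)) / 4)) - u (x0 + 0 * h))))) - 1 / 2 * Dbar (u x0) (u (x0 + (-1) * h)) * ((kappa * ((u (x0 + (-1) * h) + u (x0 + 0 * h)) / 2) + (1 - kappa) * (u (x0 + 0 * h) - (u (x0 + 1 * h) - u (x0 + (-1) * h)) / 4)) - (kappa * ((u (x0 + (-1) * h) + u (x0 + 0 * h)) / 2) + (1 - kappa) * (u (x0 + (-1) * h) + (u (x0 + 0 * h) - u (x0 + (-2) * h)) / 4)))).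

Lemma Err_clean f Dbar kappa theta2 u x0 h
  (HDbar_sym : forall v w, Dbar v w = Dbar w v) : 0 < h ->
  Err f Dbar kappa 0 theta2 (nodes u x0 h) h 0 = Gcl f Dbar kappa theta2 u x0 h / h.
Proof.
  intros Hh.
  unfold Err, Phi, fL, fR, uL, uR, T_j, T_k, ux, uxx, nodes, Gcl.
  repeat match goal with |- context [IZR ?z] =>
    let z' := eval vm_compute in z in progress change z with z' end.
  replace (x0 + 0 * h) with x0 by ring.
  rewrite (HDbar_sym (u (x0 + -1 * h)) (u x0)).
  set (A := u (x0 + -2 * h)). set (B := u (x0 + -1 * h)). set (C := u x0).
  set (E := u (x0 + 1 * h)). set (F := u (x0 + 2 * h)).
  field. lra.
Qed.

Theorem mainTheorem6
  (f D u : R -> R) (Dbar : R -> R -> R) (kappa kappa3 theta2 : R)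
  (Hf : smooth1 f) (HD : smooth1 D) (Hu : smooth1 u) (HDbar : smooth2 Dbar)
  (HDbar_sym : forall v w, Dbar v w = Dbar w v)
  (HDbar_diag : forall v, Dbar v v = D v)
  (Hk3 : kappa3 = 0) (x0 : R) :
  let E := fun h => Err f Dbar kappa kappa3 theta2 (nodes u x0 h) h 0%Z in
  let u0 := u x0 in
  let u1 := Derive u x0 in
  let u2 := Derive_n u 2 x0 in
  let u3 := Derive_n u 3 x0 in
  let u4 := Derive_n u 4 x0 in
  let fx := Derive (fun x => f (u x)) x0 in
  let Dx := Derive (fun x => D (u x)) x0 in
  let f1 := Derive f u0 in
  let f2 := Derive_n f 2 u0 in
  let f3 := Derive_n f 3 u0 in
  (exists C delta : R, 0 < delta /\
     forall h : R, 0 < h < delta ->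
       Rabs (E h
             - (fx
                + 1 / 4 * ((kappa - 1 / 3) * f1 * u3
                           + (kappa + theta2 - 1) * f2 * u1 * u2
                           + 1 / 2 * (theta2 - 2 / 3) * f3 * u1 ^ 3) * h ^ 2
                - (kappa - 1) / 8 * (Dx * u3 + D u0 * u4) * h ^ 3))
       <= C * h ^ 4)
  /\
  (kappa = 1 / 3 -> theta2 = 2 / 3 ->
   exists C delta : R, 0 < delta /\
     forall h : R, 0 < h < delta -> Rabs (E h - fx) <= C * h ^ 3).
Proof.
  intros E u0 u1 u2 u3 u4 fx Dx f1 f2 f3.
  pose proof (taylor4 u x0 Hu) as Tu.
  pose proof (taylor4 f u0 Hf) as Tf.
  pose proof (taylor4n f u0 Hf 1) as Tf1. cbn [Nat.add] in Tf1.
  change (Derive_n f 1) with (Derive f) in Tf1.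
  pose proof (taylor4n f u0 Hf 2) as Tf2. cbn [Nat.add] in Tf2.
  pose proof (taylor4 (fun t => Dbar u0 t) u0 (phi_smooth Dbar HDbar u0)) as Tp.
  cbv beta in Tp.
  set (c := Derive (fun t => Dbar u0 t) u0) in *.
  assert (HU := fun cc => J5_lin u x0 _ _ _ _ _ cc Tu).
  assert (HF := fun cc => J5_comp _ _ _ _ _ _ _ _ _ _ _ _ Tf (HU cc)).
  assert (HF1 := fun cc => J5_comp _ _ _ _ _ _ _ _ _ _ _ _ Tf1 (HU cc)).
  assert (HF2 := fun cc => J5_comp _ _ _ _ _ _ _ _ _ _ _ _ Tf2 (HU cc)).
  assert (HP := fun cc => J5_comp _ _ _ _ _ _ _ _ _ _ _ _ Tp (HU cc)).
  cbv beta in HP.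
  assert (HJ : J5 0 (u1 * f1) 0
     (1 / 4 * ((kappa - 1 / 3) * f1 * u3 + (kappa + theta2 - 1) * f2 * u1 * u2
               + 1 / 2 * (theta2 - 2 / 3) * f3 * u1 ^ 3))
     (- ((kappa - 1) / 8 * (u1 * (2 * c) * u3 + Dbar u0 u0 * u4)))
     (fun h => Gcl f Dbar kappa theta2 u x0 h)).
  { eapply J5_eq. unfold Gcl. jet.
    all: unfold u1, u2, u3, u4, f1, f2, f3, u0. all: field. }
  destruct HJ as [C [d [Hd HC]]].
  assert (Hfx : fx = u1 * f1).
  { unfold fx, u1, f1, u0. rewrite Derive_comp. reflexivity.
    exact (Hf 0%nat (u x0)). exact (Hu 0%nat x0). }
  assert (HDx : Dx = u1 * (2 * c)).
  { unfold Dx, u1, c, u0. rewrite Derive_comp.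
    rewrite (D_deriv Dbar D HDbar HDbar_sym HDbar_diag). reflexivity.
    exact (HD 0%nat (u x0)). exact (Hu 0%nat x0). }
  assert (HD0 : D u0 = Dbar u0 u0) by (symmetry; apply HDbar_diag).
  assert (Main : forall h, 0 < h < d ->
       Rabs (E h
             - (fx
                + 1 / 4 * ((kappa - 1 / 3) * f1 * u3
                           + (kappa + theta2 - 1) * f2 * u1 * u2
                           + 1 / 2 * (theta2 - 2 / 3) * f3 * u1 ^ 3) * h ^ 2
                - (kappa - 1) / 8 * (Dx * u3 + D u0 * u4) * h ^ 3))
       <= C * h ^ 4).
  { intros h Hh. specialize (HC h Hh). cbv beta in HC.
    unfold E. rewrite Hk3. rewrite Err_clean by (auto; lra).
    rewrite Hfx, HDx, HD0.
    match type of HC with Rabs ?X <= _ =>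
      match goal with |- Rabs ?Y <= _ => replace Y with (X / h) by (field; lra) end end.
    unfold Rdiv. rewrite Rabs_mult, Rabs_inv, (Rabs_right h) by lra.
    replace (C * h ^ 4) with (C * h ^ 5 * / h) by (field; lra).
    apply Rmult_le_compat_r; [left; apply Rinv_0_lt_compat; lra | exact HC]. }
  split.
  - exists C, d. split; auto.
  - intros Hk Ht.
    set (K := (kappa - 1) / 8 * (Dx * u3 + D u0 * u4)).
    exists (Rabs C + Rabs K), (Rmin d 1). split. apply minpos; lra.
    intros h [Hh Hh']. apply mins in Hh'. destruct Hh' as [H1 H2].
    specialize (Main h (conj Hh H1)). fold K in Main.
    assert (Hz : 1 / 4 * ((kappa - 1 / 3) * f1 * u3 + (kappa + theta2 - 1) * f2 * u1 * u2
                   + 1 / 2 * (theta2 - 2 / 3) * f3 * u1 ^ 3) = 0).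
    { rewrite Hk, Ht. field. }
    rewrite Hz in Main.
    replace (E h - fx) with ((E h - (fx + 0 * h ^ 2 - K * h ^ 3)) - K * h ^ 3) by ring.
    eapply Rle_trans. apply Rabs_triang. rewrite Rabs_Ropp, Rabs_mult.
    assert (0 <= h ^ 4 <= h ^ 3).
    { split. apply pow_le; lra. replace (h ^ 4) with (h * h ^ 3) by ring.
      assert (0 <= h ^ 3) by (apply pow_le; lra). nra. }
    assert (0 <= h ^ 3) by (apply pow_le; lra).
    rewrite (Rabs_right (h ^ 3)) by lra.
    assert (C * h ^ 4 <= Rabs C * h ^ 3).
    { apply Rle_trans with (Rabs C * h ^ 4). apply Rmult_le_compat_r. lra. apply Rle_abs.
      apply Rmult_le_compat_l. apply Rabs_pos. lra. }
    nra.
Qed.
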